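(* Let $G$ be a group and $\mathcal{P}$ a poset, under inclusion, of subgroups of $G$ such that $1\in\mathcal{P}$ and the inclusions $\{U\hookrightarrow G\}_{U\in\mathcal{P}}$ form a colimit cone, i.e. $G\cong\operatorname{colim}_{U\in\mathcal{P}}U$. Let $H\colon\mathcal{P}\to\mathrm{Ab}$ be the functor with $H(U)=\{\sum_{g\in G}n_g g\in\mathbb{Z}[G]\mid \sum_{u\in U}n_{ug}=0\text{ for all }g\in G\}$ and sending inclusions of subgroups to inclusions. Let $U\in\mathcal{P}$ and suppose that for every finite subset $J\subset\mathcal{P}_{\le U}$, setting $M=\max J$, the subgroup $\langle V\mid V\in M\rangle$ is the free product of the subgroups $\{V\}_{V\in M}$ with amalgamated subgroup $\bigcap_{V\in M}V$, and $\bigcap_{V\in M}V\in\mathcal{P}$. Then $H$ is pseudo-projective at $U$.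
   Context: $\mathcal{P}_{\le U}=\{V\in\mathcal{P}:V\le U\}$; $\max J$ is the set of maximal elements of $J$. For $V\le W$ in $\mathcal{P}$, $H(V<W)$ is the inclusion $H(V)\subseteq H(W)$, and $\operatorname{Im}_H(V)=\sum_{W<V}\operatorname{Im}H(W<V)$. $H$ is pseudo-projective at $U$ if for every finite $J\subset\mathcal{P}_{\le U}$ and every $\oplus_{V\in J}x_V\in\bigoplus_{V\in J}H(V)$ with $\sum_{V\in J}H(V<U)(x_V)=0$, one has $x_V\in\operatorname{Im}_H(V)$ for all $V\in\max J$. *)

(* Defs.v *)
From HB Require Import structures.
From mathcomp Require Import ssreflect ssrfun ssrbool eqtype ssrnat seq choice.
From mathcomp Require Import fintype bigop monoid ssralg ssrint.
From mathcomp Require Import boolp classical_sets functions cardinality fsbigop.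

Set Implicit Arguments.
Unset Strict Implicit.
Unset Printing Implicit Defensive.

Local Open Scope classical_set_scope.

Section Defs.
Variable G : groupType.

Definition is_subgroup (U : set G) : Prop :=
  U 1%g /\ (forall x y, U x -> U y -> U (x * y^-1)%g).

Definition gen_subgroup (S : set G) : set G :=
  [set x | forall K : set G, is_subgroup K -> S `<=` K -> K x].

Definition hom_on (X : groupType) (U : set G) (f : G -> X) : Prop :=
  forall a b, U a -> U b -> f (a * b)%g = (f a * f b)%g.

Definition colimit_cone (P : set (set G)) : Prop :=
  forall (X : groupType) (f : set G -> G -> X),
    (forall U, P U -> hom_on U (f U)) ->
    (forall V W, P V -> P W -> V `<=` W -> forall v, V v -> f W v = f V v) ->
    exists! F : G -> X, hom_on setT F /\
      (forall U, P U -> forall u, U u -> F u = f U u).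

(* K (with the inclusions V -> K, V in M) is the free product of the
   subgroups V in M with amalgamated subgroup A (A contained in each V):
   the universal property of the colimit of the diagram {A -> V}_{V in M}. *)
Definition is_amalgamated_product (K : set G) (M : set (set G)) (A : set G) : Prop :=
  forall (X : groupType) (f : set G -> G -> X),
    (forall V, M V -> hom_on V (f V)) ->
    (forall V W a, M V -> M W -> A a -> f V a = f W a) ->
    exists F : G -> X, hom_on K F /\
      (forall V, M V -> forall v, V v -> F v = f V v) /\
      (forall F' : G -> X, hom_on K F' ->
         (forall V, M V -> forall v, V v -> F' v = f V v) ->
         forall k, K k -> F' k = F k).

Definition below (P : set (set G)) (U : set G) : set (set G) :=
  [set V | P V /\ V `<=` U].

Definition maximals (J : set (set G)) : set (set G) :=
  [set V | J V /\ (forall W, J W -> V `<=` W -> W = V)].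

(* Elements of Z[G] are finitely supported functions G -> int (g |-> n_g). *)
Definition ZG : set (G -> int) := [set x | finite_set [set g | x g != 0%R]].

Definition Hmod (U : set G) : set (G -> int) :=
  [set x | ZG x /\ forall g, (\sum_(u \in U) x (u * g)%g)%R = 0%R].

(* Im_H(V) = sum_{W < V, W in P} Im H(W < V)  (H(W < V) is the inclusion);
   the sum of subgroups is the set of finite sums of their elements. *)
Definition ImH (P : set (set G)) (V : set G) : set (G -> int) :=
  [set y | exists (n : nat) (W : 'I_n -> set G) (z : 'I_n -> G -> int),
     (forall k, P (W k) /\ W k `<` V /\ Hmod (W k) (z k)) /\
     (forall g, y g = (\sum_(k < n) z k g)%R)].

Definition pseudo_projective (P : set (set G)) (U : set G) : Prop :=
  forall (J : set (set G)) (x : set G -> G -> int),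
    finite_set J -> J `<=` below P U ->
    (forall V, J V -> Hmod V (x V)) ->
    (forall g, (\sum_(V \in J) x V g)%R = 0%R) ->
    forall V, maximals J V -> ImH P V (x V).

End Defs.

(* Main.v *)
Require Import Defs.
From HB Require Import structures.
From mathcomp Require Import ssreflect ssrfun ssrbool eqtype ssrnat seq choice.
From mathcomp Require Import fintype bigop monoid ssralg ssrint.
From mathcomp Require Import finmap.
From mathcomp Require Import boolp classical_sets functions cardinality fsbigop.

Set Implicit Arguments.
Unset Strict Implicit.
Unset Printing Implicit Defensive.
Import GRing.Theory.
Local Open Scope classical_set_scope.

Definition sdp (G : groupType) : Type := ((G -> int) * G)%type.
HB.instance Definition _ (G : groupType) := Choice.on (sdp G).

Section SD.
Variable G : groupType.
Definition sd_mul (p q : sdp G) : sdp G :=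
  (fun x => (p.1 (q.2 * x)%g + q.1 x)%R, (p.2 * q.2)%g).
Definition sd_one : sdp G := (fun=> 0%R, 1%g).
Definition sd_inv (p : sdp G) : sdp G := (fun x => (- p.1 (p.2^-1 * x)%g)%R, (p.2^-1)%g).

Lemma sd_mulA : associative sd_mul.
Proof.
move=> [f a] [g b] [k c]; rewrite /sd_mul /=; congr pair; last by rewrite mulgA.
by apply: funext => x; rewrite mulgA addrA.
Qed.
Lemma sd_mul1 : left_id sd_one sd_mul.
Proof. by move=> [f a]; rewrite /sd_mul /=; congr pair; [apply: funext=> x; rewrite add0r|rewrite mul1g]. Qed.
Lemma sd_mulg1 : right_id sd_one sd_mul.
Proof. by move=> [f a]; rewrite /sd_mul /=; congr pair; [apply: funext=> x; rewrite mul1g addr0|rewrite mulg1]. Qed.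
Lemma sd_mulV : left_inverse sd_one sd_inv sd_mul.
Proof. by move=> [f a]; rewrite /sd_mul /=; congr pair; [apply: funext=> x; rewrite mulKg addNr|rewrite mulVg]. Qed.
Lemma sd_mulgV : right_inverse sd_one sd_inv sd_mul.
Proof. by move=> [f a]; rewrite /sd_mul /=; congr pair; [apply: funext=> x; rewrite addrN|rewrite mulgV]. Qed.
End SD.

HB.instance Definition _ (G : groupType) :=
  isGroup.Build (sdp G) (@sd_mulA G) (@sd_mul1 G) (@sd_mulg1 G) (@sd_mulV G) (@sd_mulgV G).

Lemma sd_mulE (G : groupType) (p q : sdp G) : (p * q)%g = sd_mul p q.
Proof. by []. Qed.

Section Sub.
Local Open Scope ring_scope.
Variable G : groupType.
Implicit Types V : set G.

Lemma sg1 V : is_subgroup V -> V 1%g.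
Proof. by case. Qed.
Lemma sgV V x : is_subgroup V -> V x -> V (x^-1)%g.
Proof. by move=> [V1 VM] Vx; have := VM 1%g x V1 Vx; rewrite mul1g. Qed.
Lemma sgM V x y : is_subgroup V -> V x -> V y -> V (x * y)%g.
Proof. by move=> sV Vx Vy; have := sV.2 x (y^-1)%g Vx (sgV sV Vy); rewrite invgK. Qed.
Lemma sgMl V u x : is_subgroup V -> V u -> V (u * x)%g = V x.
Proof.
move=> sV Vu; apply: propext; split; last exact: sgM.
by move=> Vux; have := sgM sV (sgV sV Vu) Vux; rewrite mulKg.
Qed.

Lemma gen_sg (S : set G) : is_subgroup (gen_subgroup S).
Proof.
split; first by move=> K [].
by move=> x y Kx Ky K sK SK; apply: sK.2; [apply: Kx|apply: Ky].
Qed.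
Lemma gen_sub (S : set G) : S `<=` gen_subgroup S.
Proof. by move=> x Sx K _; apply. Qed.

Lemma bigcap_sg (M : set (set G)) : (forall V, M V -> is_subgroup V) ->
  is_subgroup (\bigcap_(V in M) V).
Proof.
move=> sM; split; first by move=> V MV; apply: sg1 (sM V MV).
by move=> x y Ax Ay V MV; apply: (sM V MV).2; [apply: Ax|apply: Ay].
Qed.

Definition ind (A : set G) (x : G) : int := if `[< A x >] then 1 else 0.

Lemma core_h (M : set (set G)) (V0 : set G) :
  (forall V, M V -> is_subgroup V) -> M V0 ->
  is_amalgamated_product (gen_subgroup (\bigcup_(V in M) V)) M (\bigcap_(V in M) V) ->
  exists h : G -> int, forall V, M V -> forall v x, V v ->
    h (v * x)%g = h x + (if `[< V = V0 >] then
       ind (\bigcap_(V in M) V) (v * x)%g - ind (\bigcap_(V in M) V) x else 0).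
Proof.
move=> sM M0 amal.
set A := \bigcap_(V in M) V; set K := gen_subgroup (\bigcup_(V in M) V).
have sA : is_subgroup A by apply: bigcap_sg.
have sK : is_subgroup K by apply: gen_sg.
have VK V : M V -> V `<=` K by move=> MV v Vv; apply: gen_sub; exists V.
have AV0 : A `<=` V0 by move=> a; apply.
have indA a x : A a -> ind A (a * x)%g = ind A x by move=> Aa; rewrite /ind sgMl.
pose c V v : G -> int := fun x => if `[< V = V0 >] then ind A (v * x)%g - ind A x else 0.
pose f V v : sdp G := (c V v, v).
have homf : forall V, M V -> hom_on V (f V).
  move=> V MV a b _ _; rewrite sd_mulE /sd_mul /f /=; congr pair.
  apply: funext => x; rewrite /c; case: ifP => _; last by rewrite addr0.
  by rewrite addrA subrK mulgA.
have compf : forall V W a, M V -> M W -> A a -> f V a = f W a.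
  move=> V W a MV MW Aa; rewrite /f /c; congr pair; apply: funext => x.
  by rewrite indA // subrr; case: ifP; case: ifP.
have [F [homF [FV _]]] := amal (sdp G) f homf compf.
have [F0 [_ [_ uniq0]]] := amal G (fun _ v => v) (fun _ _ _ _ _ _ => erefl) (fun _ _ _ _ _ _ => erefl).
have F2 k : K k -> (F k).2 = k.
  move=> Kk.
  have H1 : hom_on K (fun k => (F k).2) by move=> a b Ka Kb; rewrite homF.
  have H2 : forall V, M V -> forall v, V v -> (F v).2 = v.
    by move=> V MV v Vv /=; rewrite (FV V MV v Vv).
  rewrite (uniq0 _ H1 H2 k Kk).
  exact: esym (uniq0 id (fun _ _ _ _ => erefl) (fun _ _ _ _ => erefl) k Kk).
exists (fun x => if `[< K x >] then (F x).1 1%g else 0).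
move=> V MV v x Vv; have Kv := VK V MV v Vv.
case: (pselect (K x)) => Kx.
  have Kvx : K (v * x)%g by apply: (sgM sK).
  rewrite (asboolT Kvx) (asboolT Kx) /= homF // sd_mulE /sd_mul /= F2 // mulg1 (FV V MV v Vv) /= /c addrC.
  by [].
have nKvx : ~ K (v * x)%g by rewrite (sgMl _ sK).
rewrite (asboolF nKvx) (asboolF Kx) add0r; case: ifP => // _.
have nA y : ~ K y -> ind A y = 0.
  by move=> nKy; rewrite /ind asboolF // => /AV0/(VK _ M0).
by rewrite !nA // subrr.
Qed.

Lemma sgMr V u x : is_subgroup V -> V u -> V (x * u)%g = V x.
Proof.
move=> sV Vu; apply: propext; split; last by move=> Vx; apply: sgM.
by move=> Vxu; have := sgM sV Vxu (sgV sV Vu); rewrite mulgK.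
Qed.

Lemma pair0 (V T : set G) (y psi : G -> int) :
  is_subgroup V -> finite_set T -> (forall z, ~ T z -> y z = 0) ->
  (forall u z, V u -> psi (u * z)%g = psi z) ->
  (forall g, \sum_(u \in V) y (u * g)%g = 0) ->
  \sum_(z \in T) y z * psi z = 0.
Proof.
move=> sV finT yT psiV yV.
pose rho z := xget 1%g [set w | V (w * z^-1)%g].
have rhoV z : V (rho z * z^-1)%g.
  by apply: (@xgetI _ 1%g [set w | V (w * z^-1)%g] z); rewrite /= mulgV; apply: sg1.
have rhoM u z : V u -> rho (u * z)%g = rho z.
  move=> Vu; rewrite /rho; congr xget; apply: funext => w /=.
  by rewrite invgM mulgA (sgMr _ sV (sgV sV Vu)).
have psirho z : psi (rho z) = psi z.
  by rewrite -[rho z](mulgVK z) psiV.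
have rhoE r z : rho r = r -> (rho z = r <-> V (z * r^-1)%g).
  move=> rr; split.
    by move=> <-; have := sgV sV (rhoV z); rewrite invgM invgK.
  by move=> Vzr; rewrite -[z](mulgVK r) rhoM.
pose R := rho @` T.
have finR : finite_set R by apply: finite_image.
transitivity (\sum_(z \in T) \sum_(r \in R) (if rho z == r then y z * psi r else 0)).
  apply: eq_fsbigr => z /[!inE] Tz.
  rewrite (fsbigD1 (rho z)) //; last by exists z.
  rewrite eqxx psirho fsbig1 ?Monoid.mulm1 // => r [_ /= nr].
  by case: eqP => // rz; case: nr.
rewrite exchange_fsbig //.
rewrite fsbig1 //.
move=> r0 [z0 Tz0 <-].
have rr : rho (rho z0) = rho z0 by rewrite -{1}[rho z0](mulgVK z0) (rhoM _ _ (rhoV z0)).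
set r := rho z0 in rr *.
pose B := [set z | rho z = r].
have BE : B = (fun u => u * r)%g @` V.
  apply/seteqP; split => z.
    by rewrite /B /= (rhoE r z rr) => Vzr; exists (z * r^-1)%g => //; rewrite mulgVK.
  by move=> [u Vu <-]; rewrite /B /= rhoM.
transitivity (\sum_(z \in T `&` B) y z * psi r).
  rewrite fsbig_mkcondr; apply: eq_fsbigr => z _.
  by congr (if _ then _ else _); apply/eqP/idP; rewrite inE.
rewrite (fsbig_widen _ B); last 2 first.
- by move=> z [].
- by move=> z [Bz /not_andP [nT|//]] /=; rewrite yT // mul0r.
rewrite -mulr_fsuml BE fsbig_image ?yV ?mul0r //.
by move=> a b _ _; apply: mulIg.
Qed.

Lemma list_max (s : seq (set G)) W : W \in s ->
  exists2 V, V \in s & (W `<=` V /\ forall V', V' \in s -> V `<=` V' -> V' = V).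
Proof.
elim: s W => [//|a s IH] W; rewrite in_cons => /orP [/eqP -> | Ws].
  case: (pselect (exists2 b, b \in s & a `<=` b)) => [[b bs ab] | nb].
    have [V Vs [bV Vmax]] := IH b bs.
    exists V; first by rewrite in_cons Vs orbT.
    split; first exact: subset_trans ab bV.
    move=> V'; rewrite in_cons => /orP [/eqP -> | V's] VV'; last exact: Vmax.
    by apply/seteqP; split => //; apply: subset_trans ab bV.
  exists a; first exact: mem_head.
  split=> // V'; rewrite in_cons => /orP [/eqP -> // | V's] aV'.
  by exfalso; apply: nb; exists V'.
have [V Vs [WV Vmax]] := IH W Ws.
case: (pselect (V `<=` a)) => Va.
  exists a; first exact: mem_head.
  split; first exact: subset_trans WV Va.
  move=> V'; rewrite in_cons => /orP [/eqP -> // | V's] aV'.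
  have eV' := Vmax V' V's (subset_trans Va aV').
  by rewrite eV'; apply/seteqP; split => //; rewrite -eV'.
exists V; first by rewrite in_cons Vs orbT.
split=> // V'; rewrite in_cons => /orP [/eqP -> // | V's] VV'; last exact: Vmax.
Qed.

Lemma below_max (J : set (set G)) W : finite_set J -> J W ->
  exists V, maximals J V /\ W `<=` V.
Proof.
move=> finJ JW.
have memJ V : (V \in (fset_set J : seq _)) = (V \in J) by rewrite in_fset_set.
have Ws : W \in (fset_set J : seq _) by rewrite memJ inE.
have [V Vs [WV Vmax]] := @list_max (fset_set J : seq _) W Ws.
exists V; split=> //; split; first by move: Vs; rewrite memJ inE.
by move=> W' JW' VW'; apply: Vmax => //; rewrite memJ inE.
Qed.

Lemma fsumN (T : choiceType) (P : set T) (F : T -> int) :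
  \sum_(i \in P) - F i = - \sum_(i \in P) F i.
Proof.
have E : P `&` (fun i => - F i) @^-1` [set~ 0] = P `&` F @^-1` [set~ 0].
  apply/seteqP; split => i [Pi /= Fi]; split => //= Fi0; apply: Fi.
    by rewrite Fi0 oppr0.
  by rewrite -[F i]opprK Fi0 oppr0.
case: (pselect (finite_set (P `&` F @^-1` [set~ 0]))) => fin.
  by rewrite [LHS]fsbig_supp [X in - X]fsbig_supp E !fsbig_finite // sumrN.
by rewrite !fsbig_dflt ?oppr0 // E.
Qed.

Lemma Hmod_opp (W : set G) f : Hmod W f -> Hmod W (fun z => - f z).
Proof.
move=> [fin Hf]; split.
  by apply: sub_finite_set fin => z /=; rewrite oppr_eq0.
by move=> g; rewrite fsumN Hf oppr0.
Qed.

Lemma Hmod_tr (W : set G) f g : Hmod W f -> Hmod W (fun z => f (z * g)%g).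
Proof.
move=> [fin Hf]; split.
  apply: sub_finite_set (finite_image (fun z => z * g^-1)%g fin) => z /= fz.
  by exists (z * g)%g => //; rewrite mulgK.
move=> g'; rewrite -[RHS](Hf (g' * g)%g); apply: eq_fsbigr => u _ /=.
by rewrite mulgA.
Qed.

Lemma ImH_list (P : set (set G)) V y (L : seq (set G * (G -> int))) :
  (forall p, p \in L -> [/\ P p.1, p.1 `<` V & Hmod p.1 p.2]) ->
  (forall z, y z = \sum_(p <- L) p.2 z) -> ImH P V y.
Proof.
move=> HL Hy; pose d : set G * (G -> int) := (set0, fun=> 0).
exists (size L), (fun k => (nth d L k).1), (fun k => (nth d L k).2); split.
  by move=> k; have [? ? ?] := HL _ (mem_nth d (ltn_ord k)).
by move=> g; rewrite Hy (big_nth d) big_mkord.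
Qed.

Definition ysum (J : set (set G)) (x : set G -> G -> int) (V0 : set G) (z : G) : int :=
  \sum_(W \in J) (if `[< W `<=` V0 >] then x W z else 0).

Lemma key0 (J : set (set G)) (x : set G -> G -> int) (V0 : set G) :
  finite_set J -> (forall V, J V -> is_subgroup V) ->
  (forall V, J V -> Hmod V (x V)) ->
  (forall g, \sum_(V \in J) x V g = 0) -> maximals J V0 ->
  is_amalgamated_product (gen_subgroup (\bigcup_(V in maximals J) V))
    (maximals J) (\bigcap_(V in maximals J) V) ->
  \sum_(a \in \bigcap_(V in maximals J) V) ysum J x V0 a = 0.
Proof.
move=> finJ sJ Hx Hs M0 amal.
have sM V : maximals J V -> is_subgroup V by move=> [JV _]; apply: sJ.
have [h Hh] := core_h sM M0 amal.
set M := maximals J in Hh M0 *.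
set A := \bigcap_(V in M) V in Hh *.
pose phi := ind A.
pose T := \bigcup_(W in J) [set z | x W z != 0].
have finT : finite_set T by apply: bigcup_finite => // W JW; exact: (Hx W JW).1.
have xT W z : J W -> ~ T z -> x W z = 0.
  by move=> JW nT; case: (eqVneq (x W z) 0) => // nz; exfalso; apply: nT; exists W.
have yT z : ~ T z -> ysum J x V0 z = 0.
  by move=> nT; rewrite /ysum fsbig1 // => W JW; rewrite xT //; case: ifP.
transitivity (\sum_(z \in T) ysum J x V0 z * phi z).
  rewrite -(fsbig_widen (T `&` A) A); last 2 first.
  - by move=> z [].
  - by move=> z [Az nTA]; apply: yT => Tz; apply: nTA.
  rewrite fsbig_mkcondr; apply: eq_fsbigr => z _; rewrite /phi /ind.
  case: (pselect (A z)) => Az.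
    by rewrite mem_set // asboolT // mulr1.
  by rewrite memNset // asboolF // mulr0.
transitivity (\sum_(z \in T) \sum_(W \in J)
   (if `[< W `<=` V0 >] then x W z * phi z else 0)).
  apply: eq_fsbigr => z _; rewrite /ysum mulr_fsuml; apply: eq_fsbigr => W _.
  by case: ifP => _ //; rewrite mul0r.
rewrite exchange_fsbig //.
transitivity (\sum_(W \in J) \sum_(z \in T) x W z * h z).
  apply: eq_fsbigr => W /[!inE] JW.
  case: (pselect (W `<=` V0)) => WV0.
    rewrite asboolT //.
    have P0 : \sum_(z \in T) x W z * (h z - phi z) = 0.
      apply: (pair0 (sJ W JW) finT (fun z => xT W z JW)) _ (Hx W JW).2.
      move=> u z Wu /=; have V0u := WV0 u Wu.
      by rewrite (Hh V0 M0 u z V0u) asboolT // addrA addrAC addrK.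
    have P1 : \sum_(z \in T) x W z * h z = \sum_(z \in T) x W z * phi z.
      apply/eqP; rewrite -subr_eq0 !fsbig_finite // -sumrB; apply/eqP.
      rewrite -[RHS]P0 fsbig_finite //; apply: eq_bigr => z _.
      by rewrite mulrBr.
    by rewrite P1.
  rewrite asboolF // fsbig1 //.
  have [V' [MV' WV']] := below_max finJ JW.
  have V'0 : V' <> V0 by move=> E; apply: WV0; rewrite -E.
  symmetry; apply: (pair0 (sJ W JW) finT (fun z => xT W z JW)) _ (Hx W JW).2.
  by move=> u z Wu; rewrite (Hh V' MV' u z (WV' u Wu)) asboolF // addr0.
rewrite -exchange_fsbig // fsbig1 // => z Tz.
by rewrite -mulr_fsuml Hs mul0r.
Qed.

End Sub.

Theorem proposition4p1 (G : groupType) (P : set (set G)) (U : set G) :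
  (forall V, P V -> is_subgroup V) ->
  P [set 1%g] ->
  colimit_cone P ->
  P U ->
  (forall J : set (set G), finite_set J -> J `<=` below P U -> J !=set0 ->
     is_amalgamated_product (gen_subgroup (\bigcup_(V in maximals J) V))
       (maximals J) (\bigcap_(V in maximals J) V) /\
     P (\bigcap_(V in maximals J) V)) ->
  pseudo_projective P U.
Proof.
move=> hsub hP1 colim PU hamal J x finJ JbP Hx Hsum V0 maxV0.
have JV0 : J V0 := maxV0.1.
have J0 : J !=set0 by exists V0.
have [amal PA] := hamal J finJ JbP J0.
have sJ V : J V -> is_subgroup V by move=> JV; apply: hsub; exact: (JbP V JV).1.
set A := \bigcap_(V in maximals J) V in amal PA *.
pose S := [set W | J W /\ W `<` V0].
have finS : finite_set S by apply: sub_finite_set finJ => W [].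
have decomp z : x V0 z = (ysum J x V0 z + \sum_(W \in S) - x W z)%R.
  rewrite fsumN /ysum (fsbigD1 V0) //= asboolT // -addrA.
  have -> : (\sum_(W \in J `\ V0) (if `[< W `<=` V0 >] then x W z else 0) =
             \sum_(W \in S) x W z)%R.
    transitivity (\sum_(W \in (J `\ V0) `&` [set W | W `<=` V0]) x W z)%R.
      rewrite [RHS]fsbig_mkcondr; apply: eq_fsbigr => W _; by [].
    apply: eq_fsbigl; apply/seteqP; split => W.
      move=> [[JW /= nWV0] WV0]; split => //; split => // V0W; apply: nWV0.
      by apply/seteqP.
    move=> [JW [WV0 nV0W]]; split => //; split => // /= E; apply: nV0W.
    by rewrite E.
  by rewrite subrr addr0.
have Smem p : p \in [seq (W, fun z => - x W z)%R | W <- (fset_set S : seq _)] ->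
    [/\ P p.1, p.1 `<` V0 & Hmod p.1 p.2].
  move=> /mapP [W WS ->] /=.
  have [JW WV0] : S W by move: WS; rewrite in_fset_set // inE.
  by split => //; [exact: (JbP W JW).1 | exact: Hmod_opp (Hx W JW)].
case: (pselect (A = V0)) => AV0.
  have y0 z : ysum J x V0 z = 0%R.
    rewrite /ysum -[RHS](Hsum z); apply: eq_fsbigr => W /[!inE] JW.
    rewrite asboolT //.
    have [V' [MV' WV']] := below_max finJ JW.
    have V0V' : V0 `<=` V' by rewrite -AV0 => a Aa; apply: Aa.
    have E := maxV0.2 V' MV'.1 V0V'.
    by rewrite -E.
  apply: (@ImH_list _ P V0 (x V0) [seq (W, fun z => - x W z)%R | W <- (fset_set S : seq _)]) => //.
  by move=> z; rewrite decomp y0 add0r fsbig_finite // big_map.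
have AV0' : A `<` V0.
  split; first by move=> a Aa; apply: Aa.
  by move=> V0A; apply: AV0; apply/seteqP; split => // a Aa; apply: Aa.
apply: (@ImH_list _ P V0 (x V0) ((A, ysum J x V0) ::
   [seq (W, fun z => - x W z)%R | W <- (fset_set S : seq _)])); last first.
  by move=> z; rewrite big_cons /= decomp fsbig_finite // big_map.
move=> p; rewrite in_cons => /orP [/eqP -> | ]; last exact: Smem.
split => //; split.
  apply: sub_finite_set (bigcup_finite (F := fun W => [set z | x W z != 0%R]) finJ
                                       (fun W JW => (Hx W JW).1)).
  move=> z /= nz.
  have [W JW] := @fsbigN1 _ _ _ _ _ J (fun z W => if `[< W `<=` V0 >] then x W z else 0%R) z nz.
  by case: ifP => _ nzW; [exists W | rewrite eqxx in nzW].
move=> g.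
have := @key0 _ J (fun W z => x W (z * g)%g) V0 finJ sJ
   (fun V JV => Hmod_tr g (Hx V JV)) (fun z => Hsum (z * g)%g) maxV0 amal.
by [].
Qed.
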